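(* Let $(p_n)_{n \ge 1}$ and $(q_n)_{n \ge 1}$ be strictly increasing sequences of primes with $100 < q_1$ and $q_n < p_n < q_{n+1}$ for all $n \in \mathbb{N}$, set $\alpha_n := q_n/p_n$, and assume $\alpha_1 < \frac{1}{200}$ and $\alpha_{n+1} < \frac12 \alpha_n$ for all $n$. Let $A_2 := \{\alpha_{j_k} + \sum_{i=1}^{\ell} \alpha_{j_i} : \ell \in \mathbb{N},\ k \in \{1,\dots,\ell\},\ j_1,\dots,j_\ell \in \mathbb{N} \text{ distinct}\}$, $A_3 := \{2\alpha_{j_k} + \sum_{i=1}^{\ell} \alpha_{j_i} : \ell \in \mathbb{N},\ k \in \{1,\dots,\ell\},\ j_1,\dots,j_\ell \in \mathbb{N} \text{ distinct}\}$, $A := A_2 \cup A_3$, $B := \{1\} \cup \{1 - \sum_{i=1}^\ell \alpha_i : \ell \in \mathbb{N}\}$, and let $M$ be the additive submonoid of $\mathbb{Q}$ generated by $A \cup B$. Then: (1) $M$ is atomic and its set of atoms is exactly $A \cup B$; (2) $M$ does not satisfy the ACCP.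
   Context: An atom of the additive monoid $M$ is a nonzero element not expressible as a sum of two nonzero elements of $M$; $M$ is atomic if every nonzero element is a finite sum of atoms. $M$ satisfies the ACCP if every ascending chain of principal ideals $b_1 + M \subseteq b_2 + M \subseteq \cdots$ stabilizes. *)

(* Defs.v *)
From HB Require Import structures.
From mathcomp Require Import all_boot all_order all_algebra.
Set Implicit Arguments. Unset Strict Implicit. Unset Printing Implicit Defensive.
Import Order.TTheory GRing.Theory Num.Theory.
Local Open Scope ring_scope.

Definition submonoid_gen (S : rat -> Prop) : rat -> Prop :=
  fun x => exists s : seq rat, (forall a, a \in s -> S a) /\ x = \sum_(a <- s) a.

Definition is_atom (M : rat -> Prop) (x : rat) : Prop :=
  M x /\ x <> 0 /\ forall y z, M y -> M z -> x = y + z -> y = 0 \/ z = 0.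

Definition atomic (M : rat -> Prop) : Prop :=
  forall x, M x -> x <> 0 ->
    exists s : seq rat, (forall a, a \in s -> is_atom M a) /\ x = \sum_(a <- s) a.

Definition pideal (M : rat -> Prop) (b : rat) : rat -> Prop :=
  fun x => exists m, M m /\ x = b + m.

Definition ACCP (M : rat -> Prop) : Prop :=
  forall b : nat -> rat, (forall n, M (b n)) ->
    (forall n x, pideal M (b n) x -> pideal M (b n.+1) x) ->
    exists N, forall n, (N <= n)%N -> forall x, pideal M (b n) x <-> pideal M (b N) x.

(* Indices are shifted: index n : nat here stands for n+1 in the paper. *)
Definition alpha (p q : nat -> nat) (n : nat) : rat := (q n)%:R / (p n)%:R.

Definition A2 (p q : nat -> nat) : rat -> Prop :=
  fun x => exists (s : seq nat) (k : nat), uniq s /\ k \in s /\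
    x = alpha p q k + \sum_(j <- s) alpha p q j.

Definition A3 (p q : nat -> nat) : rat -> Prop :=
  fun x => exists (s : seq nat) (k : nat), uniq s /\ k \in s /\
    x = 2 * alpha p q k + \sum_(j <- s) alpha p q j.

Definition Aset (p q : nat -> nat) : rat -> Prop := fun x => A2 p q x \/ A3 p q x.

Definition Bset (p q : nat -> nat) : rat -> Prop :=
  fun x => x = 1 \/ exists l : nat, x = 1 - \sum_(i < l) alpha p q i.

Definition Mmon (p q : nat -> nat) : rat -> Prop :=
  submonoid_gen (fun x => Aset p q x \/ Bset p q x).

(* Main.v *)
Require Import Defs.
From mathcomp Require Import all_boot all_order all_algebra.
From mathcomp Require Import zify ring lra.
Import Order.TTheory GRing.Theory Num.Theory.
Local Open Scope ring_scope.


Lemma alpha_ge0 p q j : 0 <= alpha p q j.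
Proof. by rewrite /alpha divr_ge0 ?ler0n. Qed.

Lemma alpha_gt0 p q j : (0 < q j)%N -> (0 < p j)%N -> 0 < alpha p q j.
Proof. by move=> h1 h2; rewrite /alpha divr_gt0 ?ltr0n. Qed.

Lemma sum_alpha_inv p q N :
  (forall n, alpha p q n.+1 < alpha p q n / 2) ->
  \sum_(j < N) alpha p q j + 2 * alpha p q N <= 2 * alpha p q 0.
Proof.
move=> Ha; elim: N => [|N IH]; first by rewrite big_ord0 add0r.
rewrite big_ord_recr /=; have := Ha N; lra.
Qed.

Lemma sum_alpha_le p q N :
  (forall n, alpha p q n.+1 < alpha p q n / 2) ->
  alpha p q 0 < 1 / 200 ->
  \sum_(j < N) alpha p q j <= 1 / 100.
Proof.
move=> Ha H0; have := sum_alpha_inv p q N Ha; have := alpha_ge0 p q N; lra.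
Qed.

Lemma key_dvd p q N (c0 : int) (c : nat -> int) :
  (forall i j, (i < N)%N -> (j < N)%N -> p i = p j -> i = j) ->
  (forall j, prime (p j)) -> (forall j, (0 < q j)%N /\ (q j < p j)%N) ->
  c0%:~R + \sum_(j < N) (c j)%:~R * alpha p q j = 0 :> rat ->
  forall i : 'I_N, (p i %| `|c i|)%N.
Proof.
move=> Hinj Hp Hq E i.
pose R (j : 'I_N) := (\prod_(j' < N | j' != j) p j')%N.
pose P := (\prod_(j' < N) p j')%N.
have PR (j : 'I_N) : P = (p j * R j)%N by rewrite /P (bigD1 j) //=.
have aP (j : 'I_N) : alpha p q j * P%:R = (q j * R j)%:R.
  rewrite (PR j) natrM /alpha natrM mulrA divfK //.
  by rewrite pnatr_eq0 -lt0n prime_gt0.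
have E2 : (c0 * P%:Z + \sum_(j < N) c j * (q j * R j)%:Z = 0)%R.
  apply/eqP; rewrite -(intr_eq0 rat).
  suff -> : ((c0 * P%:Z + \sum_(j < N) c j * (q j * R j)%:Z)%:~R : rat)
     = (c0%:~R + \sum_(j < N) (c j)%:~R * alpha p q j) * P%:R by rewrite E mul0r.
  rewrite rmorphD rmorphM rmorph_sum /= mulrDl mulr_suml; congr (_ + _).
  apply: eq_bigr => j _; rewrite rmorphM /= -mulrA aP //.
rewrite (bigD1 i) //= in E2.
have Hdv : (p i %| c i * (q i * R i)%:Z)%Z.
  move/eqP: E2; rewrite addrCA addr_eq0 => /eqP ->.
  rewrite rpredN rpredD //.
    by apply: dvdz_mull; rewrite dvdzE /= (PR i) dvdn_mulr.
  apply: rpred_sum => j Hj; apply: dvdz_mull; rewrite dvdzE /=.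
  by apply: dvdn_mull; rewrite /R (bigD1 i) 1?eq_sym //= dvdn_mulr.
have Hcop : coprimez (p i) (q i * R i)%:Z.
  rewrite coprimezE /= coprimeMr; apply/andP; split.
    by rewrite prime_coprime // gtnNdvd //; case: (Hq i).
  rewrite /R; apply: (big_ind (fun x => coprime (p i) x)); first by rewrite coprimen1.
    by move=> x y h1 h2; rewrite coprimeMr h1 h2.
  move=> j Hj; rewrite prime_coprime // dvdn_prime2 //.
  apply/eqP => E3; move: Hj; have := Hinj i j (ltn_ord i) (ltn_ord j) E3.
  by move=> /val_inj ->; rewrite eqxx.
by move: Hdv; rewrite Gauss_dvdzl // dvdzE.
Qed.


Definition gen := ((seq nat * nat) * bool + nat)%type.
Definition gval p q (g : gen) : rat := match g with
 | inl (s, k, b) => (if b then 2 * alpha p q k else alpha p q k) + \sum_(j <- s) alpha p q j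
 | inr l => 1 - \sum_(i < l) alpha p q i end.
Definition gvalid (g : gen) : bool :=
  match g with inl (s, k, _) => uniq s && (k \in s) | inr _ => true end.
Definition gcf (g : gen) (j : nat) : int := match g with
 | inl (s, k, b) => ((j \in s) : nat)%:Z + (if b then 2 else 1) * ((j == k) : nat)%:Z
 | inr l => - ((j < l)%N : nat)%:Z end.
Definition gc0 (g : gen) : int := if g is inr _ then 1 else 0.
Definition gbd (g : gen) : nat :=
  match g with inl (s, _, _) => \max_(j <- s) j.+1 | inr l => l end.
Definition isB (g : gen) : bool := if g is inr _ then true else false.

Lemma sum_pick (F : nat -> rat) k N : (k < N)%N ->
  \sum_(j < N) ((nat_of_ord j == k) : nat)%:R * F j = F k.
Proof.
move=> hk; rewrite (bigD1 (Ordinal hk)) //= eqxx mul1r big1 ?addr0 // => j hj.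
suff -> : (nat_of_ord j == k) = false by rewrite mul0r.
by apply/negbTE; apply: contra hj => /eqP e; apply/eqP/val_inj.
Qed.

Lemma sum_seq_ord (F : nat -> rat) s N : uniq s -> (forall j, j \in s -> (j < N)%N) ->
  \sum_(j <- s) F j = \sum_(j < N) (((j : nat) \in s) : nat)%:R * F j.
Proof.
elim: s => [|a s IH] /=.
  by move=> _ _; rewrite big_nil big1 // => j _; rewrite mul0r.
move=> /andP [Ha Hu] Hs; rewrite big_cons IH //; last first.
  by move=> j Hj; apply: Hs; rewrite inE Hj orbT.
have HaN : (a < N)%N by apply: Hs; rewrite inE eqxx.
rewrite -(sum_pick F a N HaN) -big_split /=; apply: eq_bigr => j _.
rewrite inE; case E: (nat_of_ord j == a) => /=.
  by move/eqP: E => ->; rewrite (negbTE Ha) mul0r addr0.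
by rewrite mul0r add0r.
Qed.


Lemma gbd_in s k b j : j \in s -> (j < gbd (inl (s, k, b)))%N.
Proof. by move=> h; rewrite /gbd; apply: (@leq_bigmax_seq _ s xpredT (fun i => i.+1) j h). Qed.

Lemma gval_rep p q g N : gvalid g -> (gbd g <= N)%N ->
  gval p q g = (gc0 g)%:~R + \sum_(j < N) (gcf g j)%:~R * alpha p q j.
Proof.
case: g => [[[s k] b]|l] /=.
  move=> /andP [Hu Hk] HN.
  have HsN : forall j, j \in s -> (j < N)%N.
    by move=> j Hj; apply: leq_trans HN; exact: (gbd_in s k b j Hj).
  rewrite add0r (sum_seq_ord _ _ N Hu HsN).
  have -> : \sum_(j < N) (gcf (inl (s, k, b)) j)%:~R * alpha p q j =
    \sum_(j < N) (((j : nat) \in s) : nat)%:R * alpha p q j +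
    (if b then 2 else 1) * \sum_(j < N) ((nat_of_ord j == k) : nat)%:R * alpha p q j.
    rewrite mulr_sumr -big_split /=; apply: eq_bigr => j _.
    rewrite /gcf rmorphD rmorphM /=; case: b => /=; rewrite mulrDl mulrA //.
  rewrite sum_pick ?HsN //; case: b; rewrite ?mul1r addrC //.
move=> _ HN; rewrite (big_ord_widen _ _ HN) big_mkcond /=.
rewrite -sumrN; congr (_ + _); apply: eq_bigr => j _.
by case: (nat_of_ord j < l)%N => /=; rewrite ?mulN1r ?mul1r ?oppr0 ?mul0r.
Qed.


Lemma gval_sum_rep p q gs N : all gvalid gs -> (forall g, g \in gs -> (gbd g <= N)%N) ->
 \sum_(g <- gs) gval p q g = (\sum_(g <- gs) gc0 g)%:~R +
    \sum_(j < N) (\sum_(g <- gs) gcf g j)%:~R * alpha p q j.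
Proof.
elim: gs => [|g gs IH] /=.
  by move=> _ _; rewrite !big_nil big1 ?addr0 // => j _; rewrite big_nil mul0r.
move=> /andP [Hg Hgs] Hb; rewrite big_cons IH //; last first.
  by move=> h Hh; apply: Hb; rewrite inE Hh orbT.
rewrite (gval_rep p q g N Hg); last by apply: Hb; rewrite inE eqxx.
rewrite big_cons rmorphD /=.
have -> : \sum_(j < N) (\sum_(g0 <- g :: gs) gcf g0 j)%:~R * alpha p q j =
   \sum_(j < N) (gcf g j)%:~R * alpha p q j + \sum_(j < N) (\sum_(g0 <- gs) gcf g0 j)%:~R * alpha p q j.
  by rewrite -big_split /=; apply: eq_bigr => j _; rewrite big_cons rmorphD mulrDl.
by rewrite -!addrA; congr (_ + _); rewrite addrCA.
Qed.

Definition gkey (g : gen) : nat := if g is inl (_, k, _) then k else 0%N.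

Lemma gcf_bounds g j : gvalid g ->
  [/\ (if isB g then -1 else 0) <= gcf g j, gcf g j <= 3 & (isB g -> gcf g j <= 0)].
Proof.
case: g => [[[s k] b]|l] /=.
  by move=> _; case: (j \in s); case: (j == k); case: b.
by move=> _; case: (j < l)%N.
Qed.

Lemma gcf_key g : gvalid g -> ~~ isB g -> 2 <= gcf g (gkey g).
Proof.
case: g => [[[s k] b]|l] //= /andP [_ Hk] _.
by rewrite Hk eqxx; case: b.
Qed.

Lemma gcf_key2 g j : ~~ isB g -> 2 <= gcf g j -> j = gkey g.
Proof.
case: g => [[[s k] b]|l] //= _.
by case: (j \in s); case E: (j == k); rewrite ?(eqP E) //; case: b.
Qed.

Lemma gkey_bd g : gvalid g -> ~~ isB g -> (gkey g < gbd g)%N.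
Proof.
case: g => [[[s k] b]|l] //= /andP [_ Hk] _; exact: (gbd_in s k b k Hk).
Qed.


Lemma int_le_rat (m : int) (n : nat) : m <= n%:Z -> (m%:~R : rat) <= n%:R.
Proof. move=> h. rewrite -(ler_int rat) in h. move: h. rewrite -pmulrn. exact. Qed.

Lemma gval_B p q g :
  (forall n, alpha p q n.+1 < alpha p q n / 2) -> alpha p q 0 < 1 / 200 ->
  isB g -> 99/100 <= gval p q g.
Proof.
move=> Ha H0; case: g => [x|l] hB; first discriminate hB.
rewrite /gval; have := sum_alpha_le p q l Ha H0; lra.
Qed.

Lemma gc0_A g : ~~ isB g -> gc0 g = 0.
Proof. by case: g. Qed.

Lemma gval_A p q g :
  (forall n, alpha p q n.+1 < alpha p q n / 2) -> alpha p q 0 < 1 / 200 ->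
  gvalid g -> ~~ isB g -> gval p q g <= 3/100.
Proof.
move=> Ha H0 Hv HB; rewrite (gval_rep p q g (gbd g) Hv (leqnn _)) (gc0_A g HB) add0r.
have : \sum_(j < gbd g) (gcf g j)%:~R * alpha p q j <= \sum_(j < gbd g) 3%:R * alpha p q j.
  apply: ler_sum => j _; apply: ler_wpM2r; first exact: alpha_ge0.
  have [_ h _] := gcf_bounds g j Hv; exact: (int_le_rat _ 3 h).
rewrite -mulr_sumr; have := sum_alpha_le p q (gbd g) Ha H0; lra.
Qed.

Lemma gval_gt0 p q g :
  (forall n, alpha p q n.+1 < alpha p q n / 2) -> alpha p q 0 < 1 / 200 ->
  (forall j, (0 < q j)%N /\ (q j < p j)%N) ->
  gvalid g -> 0 < gval p q g.
Proof.
move=> Ha H0 Hq Hv; case HB: (isB g).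
  have := gval_B p q g Ha H0 HB; lra.
case: g Hv HB => [[[s k] b]|l] Hv HB; last discriminate HB.
have h1 : 0 < alpha p q k.
  case: (Hq k) => h2 h3; apply: alpha_gt0; [exact: h2 | exact: leq_trans h3].
have h2 : 0 <= \sum_(j <- s) alpha p q j by apply: sumr_ge0 => j _; apply: alpha_ge0.
rewrite /gval; clear Hv HB; case: b; lra.
Qed.

Lemma gval_le1 p q g :
  (forall n, alpha p q n.+1 < alpha p q n / 2) -> alpha p q 0 < 1 / 200 ->
  gvalid g -> gval p q g <= 1.
Proof.
move=> Ha H0 Hv; case HB: (isB g).
  case: g Hv HB => [x|l] Hv HB; first discriminate HB.
  have : 0 <= \sum_(i < l) alpha p q i by apply: sumr_ge0 => j _; apply: alpha_ge0.
  rewrite /gval; lra.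
have := gval_A p q g Ha H0 Hv (negbT HB); lra.
Qed.

Lemma term_le p q g j :
  (forall n, alpha p q n.+1 < alpha p q n / 2) -> alpha p q 0 < 1 / 200 ->
  (forall j, (0 < q j)%N /\ (q j < p j)%N) ->
  gvalid g -> (gcf g j)%:~R * alpha p q j <= gval p q g.
Proof.
move=> Ha H0 Hq Hv; case HB: (isB g).
  have [_ _ h] := gcf_bounds g j Hv.
  have h2 := h HB; have h3 := gval_gt0 p q g Ha H0 Hq Hv.
  have : (gcf g j)%:~R <= (0 : rat) by rewrite -(ler_int rat) in h2.
  have := alpha_ge0 p q j; nra.
pose N := maxn (gbd g) j.+1.
have hj : (j < N)%N by rewrite leq_max leqnn orbT.
rewrite (gval_rep p q g N Hv) ?leq_maxl // (gc0_A g (negbT HB)).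
rewrite add0r (bigD1 (Ordinal hj)) //= lerDl.
apply: sumr_ge0 => i _; apply: mulr_ge0; last exact: alpha_ge0.
have [h _ _] := gcf_bounds g i Hv; rewrite HB in h.
by rewrite ler0z.
Qed.


Lemma sum_countB p q gs :
  (forall n, alpha p q n.+1 < alpha p q n / 2) -> alpha p q 0 < 1 / 200 ->
  (forall j, (0 < q j)%N /\ (q j < p j)%N) ->
  all gvalid gs -> (count isB gs)%:R * (99/100) <= \sum_(a <- gs) gval p q a.
Proof.
move=> Ha H0 Hq; elim: gs => [|a gs IH] /=.
  move=> _; rewrite big_nil mul0r; exact: lexx.
move=> /andP [Hv Hvs]; rewrite big_cons natrD mulrDl.
have h1 := IH Hvs; have h2 := gval_gt0 p q a Ha H0 Hq Hv.
case HB: (isB a).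
  have h3 := gval_B p q a Ha H0 HB; rewrite /=; lra.
rewrite /=; lra.
Qed.

Lemma sum_gcf_lb gs j : all gvalid gs -> - (count isB gs)%:Z <= \sum_(a <- gs) gcf a j.
Proof.
elim: gs => [|a gs IH] /=; first by rewrite big_nil.
move=> /andP [Hv Hvs]; rewrite big_cons.
have h1 := IH Hvs; have [h2 _ _] := gcf_bounds a j Hv.
move: h1 h2; set S := \sum_(_ <- gs) _.
case: (isB a) => /= h1 h2.
  by rewrite PoszD opprD; apply: lerD.
by rewrite add0n -[X in X <= _]add0r; apply: lerD.
Qed.


Lemma nodecomp p q g gs :
  (forall n, alpha p q n.+1 < alpha p q n / 2) -> alpha p q 0 < 1 / 200 ->
  (forall j, (0 < q j)%N /\ (q j < p j)%N) ->
  (forall j, prime (p j)) -> (forall i j, p i = p j -> i = j) ->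
  (forall j, (100 < q j)%N) ->
  gvalid g -> all gvalid gs -> (1 < size gs)%N ->
  gval p q g = \sum_(a <- gs) gval p q a -> False.
Proof.
move=> Ha H0 Hq Hpr Hinj H100 Hv Hvs Hsz Heq.
have Hcnt := sum_countB p q gs Ha H0 Hq Hvs.
rewrite -Heq in Hcnt.
have Hg1 := gval_le1 p q g Ha H0 Hv.
have HcB : (count isB gs <= 1)%N.
  have : ((count isB gs)%:R : rat) < 2%:R by lra.
  by rewrite ltr_nat.
have HcA : ~~ isB g -> count isB gs = 0%N.
  move=> HB; have := gval_A p q g Ha H0 Hv HB => h.
  have : ((count isB gs)%:R : rat) < 1%:R by lra.
  by rewrite ltr_nat; case: (count isB gs).
pose N := \max_(a <- g :: gs) gbd a.
have HN : forall a, a \in g :: gs -> (gbd a <= N)%N.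
  by move=> a Ha'; apply: (@leq_bigmax_seq _ (g :: gs) xpredT gbd a Ha').
pose c (j : nat) := gcf g j - \sum_(a <- gs) gcf a j.
pose c0 := gc0 g - \sum_(a <- gs) gc0 a.
have E : c0%:~R + \sum_(j < N) (c j)%:~R * alpha p q j = 0 :> rat.
  have E1 := gval_rep p q g N Hv (HN g (mem_head _ _)).
  have E2 := gval_sum_rep p q gs N Hvs (fun a h => HN a (mem_behead (s := g :: gs) h)).
  rewrite Heq E2 in E1.
  rewrite /c0 /c rmorphB /=.
  have -> : \sum_(j < N) (gcf g j - \sum_(a <- gs) gcf a j)%:~R * alpha p q j =
     \sum_(j < N) (gcf g j)%:~R * alpha p q j - \sum_(j < N) (\sum_(a <- gs) gcf a j)%:~R * alpha p q j.
    by rewrite -sumrB; apply: eq_bigr => j _; rewrite rmorphB mulrBl.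
  lra.
have Hdv := key_dvd p q N c0 c (fun i j _ _ h => Hinj i j h) Hpr Hq E.
have HS : forall j, (j < N)%N -> gcf g j = \sum_(a <- gs) gcf a j.
  move=> j hj; have Hd := Hdv (Ordinal hj); rewrite /= in Hd.
  have [S HSd] : exists S : int, S = \sum_(a <- gs) gcf a j by eexists.
  have Hlb := sum_gcf_lb gs j Hvs; rewrite -HSd in Hlb.
  have hr : (S%:~R : rat) * alpha p q j <= 1.
    rewrite HSd rmorph_sum mulr_suml; apply: (le_trans _ Hg1); rewrite Heq !big_seq.
    by apply: ler_sum => a Ha'; apply: term_le => //; apply: (allP Hvs a Ha').
  have hp : (0 < p j)%N by apply: prime_gt0.
  rewrite /alpha mulrA ler_pdivrMr ?ltr0n // mul1r in hr.
  have : ((S * (q j)%:Z)%:~R : rat) <= ((p j)%:Z)%:~R.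
    by rewrite rmorphM /= -!pmulrn.
  rewrite ler_int => hi.
  have [hg1 hg2 _] := gcf_bounds g j Hv.
  have hq1 := H100 j; have [hq2 hq3] := Hq j.
  have hgv : -1 <= gcf g j by move: hg1; case: (isB g) => //= h; apply: le_trans h.
  move: Hd; rewrite /c -HSd => Hd.
  have [cj Hcj] : exists cj : int, cj = gcf g j - S by eexists.
  rewrite -Hcj in Hd.
  have hcb : (`|cj| < p j)%N by nia.
  have : cj = 0.
    apply/eqP; rewrite -absz_eq0; apply/negP => hne.
    have h0 : (0 < `|cj|)%N by rewrite lt0n; apply/negP.
    by have := dvdn_leq h0 Hd; rewrite leqNgt hcb.
  lia.
have HNm : forall a, a \in gs -> (gbd a <= N)%N.
  by move=> a h; apply: HN; rewrite inE h orbT.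
case HB: (isB g).
  have hasA : has (predC isB) gs.
    apply/negPn/negP => hn; move: hn; rewrite has_predC negbK all_count => /eqP hc.
    by move: HcB; rewrite hc leqNgt Hsz.
  case/hasP: hasA => a Ha' HaA; rewrite /= in HaA.
  have Hva := allP Hvs a Ha'.
  have hk : (gkey a < N)%N := leq_trans (gkey_bd a Hva HaA) (HNm a Ha').
  have := HS _ hk; rewrite (big_rem a Ha') /=.
  have [S HSd] : exists S : int, S = \sum_(y <- rem a gs) gcf y (gkey a) by eexists.
  rewrite -HSd.
  have Hvr : all gvalid (rem a gs).
    by apply/allP => x hx; apply: (allP Hvs); exact: mem_rem hx.
  have Hlb := sum_gcf_lb (rem a gs) (gkey a) Hvr; rewrite -HSd in Hlb.
  have Hc : count isB gs = (isB a + count isB (rem a gs))%N.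
    by rewrite (permP (perm_to_rem Ha')).
  have [_ _ h3] := gcf_bounds g (gkey a) Hv; have h4 := h3 HB.
  have h5 := gcf_key a Hva HaA.
  move: Hc; rewrite (negbTE HaA) add0n => Hc.
  rewrite Hc in HcB.
  lia.
have HB' : ~~ isB g by rewrite HB.
have Hc0 := HcA HB'.
case Egs: gs Hsz => [|a1 [|a2 rest]] // _.
rewrite Egs in HS HNm Hvs Hc0.
move: Hvs Hc0 => /= /and3P [Hv1 Hv2 Hvr].
case H1: (isB a1) => //; case H2: (isB a2) => //= Hr.
have hk1 : (gkey a1 < N)%N.
  by apply: leq_trans (gkey_bd a1 Hv1 (negbT H1)) (HNm a1 _); rewrite inE eqxx.
have hk2 : (gkey a2 < N)%N.
  by apply: leq_trans (gkey_bd a2 Hv2 (negbT H2)) (HNm a2 _); rewrite !inE eqxx orbT.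
have E1 := HS _ hk1; have E2 := HS _ hk2.
rewrite !big_cons in E1 E2.
have L1 := sum_gcf_lb rest (gkey a1) Hvr; have L2 := sum_gcf_lb rest (gkey a2) Hvr.
move: Hr; rewrite !add0n => Hr; rewrite Hr in L1 L2.
move: E1 E2 L1 L2.
set S1 := \sum_(_ <- rest) gcf _ (gkey a1); set S2 := \sum_(_ <- rest) gcf _ (gkey a2).
move=> E1 E2 L1 L2.
have K1 := gcf_key a1 Hv1 (negbT H1); have K2 := gcf_key a2 Hv2 (negbT H2).
have [B1 _ _] := gcf_bounds a2 (gkey a1) Hv2; rewrite H2 in B1.
have [B2 _ _] := gcf_bounds a1 (gkey a2) Hv1; rewrite H1 in B2.
have [_ U1 _] := gcf_bounds g (gkey a1) Hv.
have [_ U2 _] := gcf_bounds g (gkey a2) Hv.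
case: (eqVneq (gkey a1) (gkey a2)) => Hk.
  move: K2 U1 E1 B1 L1; rewrite -Hk => K2 U1 E1 B1 L1.
  rewrite oppr0 in L1.
  have := lerD K1 (lerD K2 L1); rewrite -E1 addr0 => h.
  by have := le_trans h U1.
rewrite oppr0 in L1 L2.
have G1 : 2 <= gcf g (gkey a1).
  by rewrite E1; apply: (le_trans K1); rewrite lerDl; apply: addr_ge0.
have G2 : 2 <= gcf g (gkey a2).
  by rewrite E2 addrCA; apply: (le_trans K2); rewrite lerDl; apply: addr_ge0.
have := gcf_key2 g _ HB' G1; have := gcf_key2 g _ HB' G2.
by move=> e2 e1; move: Hk; rewrite e1 e2 eqxx.
Qed.


Lemma gen_iff p q x : (Aset p q x \/ Bset p q x) <-> exists g, gvalid g /\ x = gval p q g.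
Proof.
split.
  case=> [[[s [k [Hu [Hk ->]]]]|[s [k [Hu [Hk ->]]]]]|[->|[l ->]]].
  - by exists (inl (s, k, false)); rewrite /= Hu Hk.
  - by exists (inl (s, k, true)); rewrite /= Hu Hk.
  - by exists (inr 0%N); rewrite /= big_ord0 subr0.
  - by exists (inr l).
case=> [[[[s k] b]|l] [Hv ->]].
  move: Hv => /= /andP [Hu Hk]; left; case: b.
    by right; exists s, k.
  by left; exists s, k.
by right; right; exists l.
Qed.

Lemma lift_gens p q (s : seq rat) : (forall a, a \in s -> Aset p q a \/ Bset p q a) ->
  exists gs, all gvalid gs /\ s = map (gval p q) gs.
Proof.
elim: s => [|a s IH] H; first by exists [::].
have [gs [Hv ->]] : exists gs, all gvalid gs /\ s = map (gval p q) gs.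
  by apply: IH => x hx; apply: H; rewrite inE hx orbT.
have [g [Hg ->]] := (gen_iff p q a).1 (H a (mem_head _ _)).
by exists (g :: gs); rewrite /= Hg Hv.
Qed.


Theorem proposition5p3 (p q : nat -> nat) :
  (forall n, prime (p n)) -> (forall n, prime (q n)) ->
  (forall n, (p n < p n.+1)%N) -> (forall n, (q n < q n.+1)%N) ->
  (100 < q 0)%N ->
  (forall n, (q n < p n)%N /\ (p n < q n.+1)%N) ->
  alpha p q 0 < 1 / 200 ->
  (forall n, alpha p q n.+1 < alpha p q n / 2) ->
  (atomic (Mmon p q) /\
   (forall x, is_atom (Mmon p q) x <-> (Aset p q x \/ Bset p q x))) /\
  ~ ACCP (Mmon p q).
Proof.
move=> Hpr Hqpr Hpinc Hqinc Hq0 Hqp H0 Ha.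
have H100 : forall j, (100 < q j)%N.
  have : forall j, (q 0 <= q j)%N.
    by elim=> // j IH; apply: leq_trans IH (ltnW (Hqinc j)).
  by move=> h j; apply: leq_trans Hq0 (h j).
have Hq : forall j, (0 < q j)%N /\ (q j < p j)%N.
  by move=> j; split; [apply: leq_trans (H100 j) | case: (Hqp j)].
have Hmono : {homo p : i j / (i < j)%N >-> (i < j)%N}.
  by apply: homo_ltn => //; move=> y x z; apply: ltn_trans.
have Hinj : forall i j, p i = p j -> i = j.
  move=> i j e; case: (ltngtP i j) => // h; have := Hmono _ _ h; rewrite e ltnn //.
pose G := fun x => Aset p q x \/ Bset p q x.
have Gpos : forall x, G x -> 0 < x.
  move=> x /(gen_iff p q x) [g [Hg ->]]; exact: gval_gt0.
have nod : forall x s, G x -> (forall a, a \in s -> G a) -> (1 < size s)%N ->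
    x <> \sum_(a <- s) a.
  move=> x s Gx Gs Hsz Hx.
  have [gs [Hv Hs]] := lift_gens p q s Gs.
  have [g [Hg Hxg]] := (gen_iff p q x).1 Gx.
  rewrite Hs size_map in Hsz; rewrite Hs big_map Hxg in Hx.
  exact: (nodecomp p q g gs Ha H0 Hq Hpr Hinj H100 Hg Hv Hsz Hx).
have sum_ge0 : forall s, (forall a, a \in s -> G a) -> 0 <= \sum_(a <- s) a.
  move=> s Gs; rewrite big_seq; apply: sumr_ge0 => a Ha'.
  exact: ltW (Gpos a (Gs a Ha')).
have sum_pos : forall a s, (forall b, b \in a :: s -> G b) -> 0 < \sum_(b <- a :: s) b.
  move=> a s Gs; rewrite big_cons.
  have h1 := Gpos a (Gs a (mem_head _ _)).
  have h2 := sum_ge0 s (fun b h => Gs b (mem_behead (s := a :: s) h)).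
  lra.
have atomG : forall x, G x -> is_atom (Mmon p q) x.
  move=> x Gx; split.
    exists [:: x]; split; last by rewrite big_seq1.
    by move=> a; rewrite inE => /eqP ->.
  split; first by have := Gpos x Gx; lra.
  move=> y z [ys [Hys ->]] [zs [Hzs ->]] Hx.
  case: ys Hys Hx => [|y1 ys] Hys Hx; first by left; rewrite big_nil.
  case: zs Hzs Hx => [|z1 zs] Hzs Hx; first by right; rewrite big_nil.
  exfalso; apply: (nod x ((y1 :: ys) ++ (z1 :: zs)) Gx).
  - by move=> a; rewrite mem_cat => /orP [/Hys|/Hzs].
  - by rewrite size_cat /= addnS.
  - by rewrite big_cat.
split; [split|].
- move=> x [s [Hs ->]] _; exists s; split => // a Ha'; apply: atomG; exact: Hs.
- move=> x; split; last exact: atomG.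
  move=> [[s [Hs Hx]] [Hne Hat]].
  case: s Hs Hx => [|a s] Hs Hx; first by exfalso; apply: Hne; rewrite Hx big_nil.
  case: s Hs Hx => [|b s] Hs Hx.
    by rewrite Hx big_seq1; apply: Hs; rewrite inE.
  have Ma : Mmon p q a.
    exists [:: a]; split; last by rewrite big_seq1.
    by move=> c; rewrite inE => /eqP ->; apply: Hs; rewrite inE eqxx.
  have Mr : Mmon p q (\sum_(c <- b :: s) c).
    exists (b :: s); split => // c hc; by apply: Hs; rewrite inE hc orbT.
  rewrite big_cons in Hx; case: (Hat a _ Ma Mr Hx) => [Ha0|Hr0].
    by have := Gpos a (Hs a (mem_head _ _)); rewrite Ha0 ltxx.
  have := sum_pos b s (fun c h => Hs c (mem_behead (s := a :: b :: s) h)).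
  by rewrite Hr0 ltxx.
move=> HA.
pose bb n := 1 - \sum_(i < n) alpha p q i.
pose b n := \sum_(a <- [:: bb n; bb n]) a.
have Gbb : forall n, G (bb n) by move=> n; right; right; exists n.
have Mb : forall n, Mmon p q (b n).
  move=> n; exists [:: bb n; bb n]; split => // a.
  by rewrite !inE => /orP [] /eqP ->; apply: Gbb.
have Hb : forall n, b n.+1 = b n - 2 * alpha p q n.
  by move=> n; rewrite /b !big_cons !big_nil /bb big_ord_recr /=; ring.
have chain : forall n x, pideal (Mmon p q) (b n) x -> pideal (Mmon p q) (b n.+1) x.
  move=> n x [m [[ms [Hms ->]] ->]].
  pose e := alpha p q n + \sum_(j <- [:: n]) alpha p q j.
  have Ge : Aset p q e \/ Bset p q e by left; left; exists [:: n], n; rewrite inE eqxx; do !split.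
  exists (\sum_(a <- e :: ms) a); split.
    exists (e :: ms); split => //.
    by move=> a; rewrite inE => /orP [/eqP ->|/Hms].
  rewrite big_cons Hb /e big_seq1; ring.
have [N HN] := HA b Mb chain.
have h1 : pideal (Mmon p q) (b N.+1) (b N.+1).
  exists 0; split; last by rewrite addr0.
  by exists [::]; split => //; rewrite big_nil.
have := (HN N.+1 (leqnSn N) (b N.+1)).1 h1.
move=> [m [[ms [Hms Hm]] Hm2]].
have := sum_ge0 ms Hms; rewrite -Hm.
have := Hb N; have [hq1 hq2] := Hq N.
have := alpha_gt0 p q N hq1 (leq_trans hq1 (ltnW hq2)).
lra.
Qed.
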